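(* Let $\kappa=\mathrm{non}(\mathsf{SMZ})$ be the minimal cardinality of a set of reals that is not strongly null. Assume that there exists a strongly unbounded set $A\subseteq\mathbb{N}^{\mathbb{N}}$ with $|A|=\kappa$. Then there exist a strongly null set of reals $X\subseteq\mathbb{R}$ and a continuous function $f$ defined on $X$ whose image $Y=f[X]$ is a set of reals that is not strongly null.
   Context: A set of reals $X\subseteq\mathbb{R}$ is strongly null (has strong measure zero) if for each sequence $(\epsilon_n)_{n\in\mathbb{N}}$ of positive reals there exists a sequence of intervals $(I_n)_{n\in\mathbb{N}}$ covering $X$ with $\mathrm{diam}(I_n)<\epsilon_n$ for all $n$. $\mathsf{SMZ}$ denotes the collection of strongly null sets of reals, and $\mathrm{non}(\mathsf{SMZ})=\min\{|X| : X\subseteq\mathbb{R},\ X\notin\mathsf{SMZ}\}$. For $f,g\in\mathbb{N}^{\mathbb{N}}$, $f\le^* g$ means $f(n)\le g(n)$ for all but finitely many $n$. A set $A\subseteq\mathbb{N}^{\mathbb{N}}$ is strongly unbounded if for each $f\in\mathbb{N}^{\mathbb{N}}$, $|\{g\in A : g\le^* f\}|<|A|$. *)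

(* Defs.v *)
From HB Require Import structures.
From mathcomp Require Import all_boot all_order all_algebra.
From mathcomp Require Import all_classical all_reals all_analysis.
Set Implicit Arguments. Unset Strict Implicit. Unset Printing Implicit Defensive.
Import Order.TTheory GRing.Theory Num.Theory.
Local Open Scope classical_set_scope.
Local Open Scope ring_scope.

Definition card_lt T U (A : set T) (B : set U) : Prop :=
  card_le A B /\ ~ card_le B A.

(* X is strongly null: for every sequence of positive reals eps, X is covered by
   intervals I_n with diam(I_n) < eps n (intervals taken closed; any interval of
   diameter < eps n lies in a closed interval of length < eps n). *)
Definition strongly_null (R : realType) (X : set R) : Prop :=
  forall eps : nat -> R, (forall n, 0 < eps n) ->
    exists a b : nat -> R, (forall n, b n - a n < eps n) /\
      X `<=` \bigcup_n `[a n, b n]%classic.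

Definition leq_star (f g : nat -> nat) : Prop :=
  exists N, forall n, (N <= n)%N -> (f n <= g n)%N.

(* |A| = non(SMZ): A is equinumerous with some non-strongly-null set of reals X0
   such that every set of reals of cardinality < |X0| is strongly null. *)
Definition card_is_nonSMZ (R : realType) T (A : set T) : Prop :=
  exists X0 : set R, ~ strongly_null X0 /\ card_eq A X0 /\
    forall Z : set R, card_lt Z X0 -> strongly_null Z.

Definition strongly_unbounded (A : set (nat -> nat)) : Prop :=
  forall f : nat -> nat, card_lt [set g | A g /\ leq_star g f] A.

(* Main.v *)
Require Import Defs.
From HB Require Import structures.
From mathcomp Require Import all_boot all_order all_algebra.
From mathcomp Require Import all_classical all_reals all_analysis.
From mathcomp Require Import lra zify.
Import Order.TTheory GRing.Theory Num.Theory.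
Import numFieldNormedType.Exports.
Local Open Scope classical_set_scope.
Local Open Scope ring_scope.

Local Open Scope nat_scope.
Definition Mm (L : nat -> nat) (K : nat) : nat := \max_(j < K.+1) L j.
Fixpoint Hh (L : nat -> nat) (n : nat) : nat :=
  match n with 0 => 0 | n'.+1 => maxn (Hh L n') (Mm L (2 ^ (n' * (Hh L n').+1))) end.
Definition GG (L : nat -> nat) (n : nat) : nat := Mm L (2 ^ (n * (Hh L n).+1)).

Lemma Mm_ge L j K : j <= K -> L j <= Mm L K.
Proof.
move=> jK; rewrite /Mm.
have -> : L j = L (Ordinal (jK : j < K.+1)) by [].
exact: leq_bigmax.
Qed.

Lemma GG_le_Hh L i n : i < n -> GG L i <= Hh L n.
Proof.
elim: n => // n IH; rewrite ltnS leq_eqVlt => /orP[/eqP ->|/IH h] /=.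
  exact: leq_maxr.
exact: leq_trans h (leq_maxl _ _).
Qed.

Lemma code_bound s : CodeSeq.code s < 2 ^ sumn (map succn s).
Proof.
elim: s => [|x s IH] //=.
rewrite expnD expnS.
have p0 : 0 < 2 ^ x by rewrite expn_gt0.
rewrite [2 * _]mulnC -mulnA ltn_pmul2l //.
move: IH; set c := CodeSeq.code s; set Q := 2 ^ _; lia.
Qed.

Lemma sumn_bound s B : all (fun x => x <= B) s -> sumn (map succn s) <= size s * B.+1.
Proof.
elim: s => [|x s IH] //= /andP[xB /IH h].
rewrite mulSn; exact: leq_add.
Qed.

Local Open Scope ring_scope.

Section Coding.
Variable R : realType.

Definition tt3 (k : nat) : R := ((3:R) ^+ k)^-1.
Definition Pp (w : nat -> nat) (n : nat) : nat := (n + \sum_(i < n.+1) w i)%N.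
Definition Sp (w : nat -> nat) (N : nat) : R := \sum_(n < N) 2 * tt3 (Pp w n).+1.
Definition Tp (w : nat -> nat) (N : nat) : R := Sp w N + tt3 (Pp w N).
Definition Ecode (w : nat -> nat) : R := sup (range (Sp w)).

Lemma tt3_gt0 k : 0 < tt3 k.
Proof. by rewrite /tt3 invr_gt0 exprn_gt0. Qed.

Lemma tt3_le {k l} : (k <= l)%N -> tt3 l <= tt3 k.
Proof.
move=> kl; rewrite /tt3 lef_pV2 ?posrE ?exprn_gt0 //.
by rewrite ler_eXn2l // ltr1n.
Qed.

Lemma tt3S k : tt3 k = 3 * tt3 k.+1.
Proof.
rewrite /tt3 exprS invfM mulrA mulfV ?mul1r //.
Qed.

Lemma Pp_ge w n : (w n <= Pp w n)%N.
Proof. by rewrite /Pp big_ord_recr /= addnA leq_addl. Qed.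

Lemma PpS w n : ((Pp w n).+1 <= Pp w n.+1)%N.
Proof.
rewrite /Pp [in X in (_ <= X)%N]big_ord_recr /=.
by rewrite addSn ltnS leq_add2l leq_addr.
Qed.

Lemma Pp_mono w m n : (m <= n)%N -> (Pp w m <= Pp w n)%N.
Proof.
elim: n => [|n IH]; first by rewrite leqn0 => /eqP ->.
rewrite leq_eqVlt => /orP[/eqP -> //|]; rewrite ltnS => /IH h.
by apply: (leq_trans h); apply: leq_trans (PpS w n); exact: leqnSn.
Qed.

Lemma SpS w N : Sp w N.+1 = Sp w N + 2 * tt3 (Pp w N).+1.
Proof. by rewrite /Sp big_ord_recr. Qed.

Lemma Sp_mono w M N : (M <= N)%N -> Sp w M <= Sp w N.
Proof.
elim: N => [|N IH]; first by rewrite leqn0 => /eqP ->.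
rewrite leq_eqVlt => /orP[/eqP -> //|]; rewrite ltnS => /IH h.
apply: (le_trans h); rewrite SpS lerDl; apply: mulr_ge0 => //; exact: ltW (tt3_gt0 _).
Qed.

Lemma Tp_anti w M N : (M <= N)%N -> Tp w N <= Tp w M.
Proof.
elim: N => [|N IH]; first by rewrite leqn0 => /eqP ->.
rewrite leq_eqVlt => /orP[/eqP -> //|]; rewrite ltnS => /IH h.
apply: le_trans h; rewrite /Tp SpS -addrA lerD2l.
rewrite [X in _ <= X]tt3S.
have : tt3 (Pp w N.+1) <= tt3 (Pp w N).+1 by apply: tt3_le; apply: PpS.
lra.
Qed.

Lemma Sp_le_Tp w M N : Sp w M <= Tp w N.
Proof.
case: (leqP M N) => h.
  apply: (@le_trans _ _ (Sp w N)); first exact: Sp_mono h.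
by rewrite /Tp lerDl ltW // tt3_gt0.
apply: (@le_trans _ _ (Tp w M)); last exact: Tp_anti (ltnW h).
by rewrite /Tp lerDl ltW // tt3_gt0.
Qed.

Lemma Ecode_bounds w N : Sp w N <= Ecode w <= Tp w N.
Proof.
have hs : has_sup (range (Sp w)).
  split; first by exists (Sp w 0), 0%N.
  by exists (Tp w 0) => _ [M _ <-]; apply: Sp_le_Tp.
apply/andP; split.
  by apply: sup_upper_bound => //; exists N.
apply: ge_sup; first by exists (Sp w 0), 0%N.
by move=> _ [M _ <-]; apply: Sp_le_Tp.
Qed.

Lemma Pp_agree w w' n : (forall i, (i <= n)%N -> w i = w' i) -> Pp w n = Pp w' n.
Proof.
move=> h; rewrite /Pp; congr (_ + _)%N; apply: eq_bigr => i _; apply: h.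
by rewrite -ltnS.
Qed.

Lemma Sp_agree w w' n : (forall i, (i < n)%N -> w i = w' i) -> Sp w n = Sp w' n.
Proof.
move=> h; rewrite /Sp; apply: eq_bigr => i _; rewrite (@Pp_agree w w') //.
by move=> j jn; apply: h; apply: leq_ltn_trans jn (ltn_ord i).
Qed.

Lemma Ecode_sep w w' n : (forall i, (i < n)%N -> w i = w' i) -> (w n < w' n)%N ->
  Ecode w' + tt3 (Pp w n).+1 <= Ecode w.
Proof.
move=> h lt.
have /andP[_ h1] := Ecode_bounds w' n.
have /andP[h2 _] := Ecode_bounds w n.+1.
have e : Sp w n = Sp w' n by apply: Sp_agree.
have pp : ((Pp w n).+1 <= Pp w' n)%N.
  rewrite /Pp !big_ord_recr /= (@eq_bigr _ _ _ _ _ _ (fun i => w (nat_of_ord i)) (fun i => w' (nat_of_ord i))).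
    by rewrite -addnS leq_add2l -addnS leq_add2l.
  by move=> i _; apply: h.
have := tt3_le pp.
move: h1 h2; rewrite /Tp SpS e => h1 h2 h3.
have := tt3_gt0 (Pp w n).+1.
lra.
Qed.

Lemma Ecode_agree w w' m : `|Ecode w - Ecode w'| < tt3 (Pp w m).+1 ->
  forall i, (i <= m)%N -> w i = w' i.
Proof.
move=> hd.
suff H : forall k, (k <= m.+1)%N -> forall i, (i < k)%N -> w i = w' i.
  by move=> i im; apply: (H m.+1).
elim=> [|k IH] km i; first by [].
have {}IH := IH (ltnW km).
rewrite ltnS leq_eqVlt => /orP[/eqP ->|]; last exact: IH.
case: (ltngtP (w k) (w' k)) => // c; exfalso.
- have h3 := Ecode_sep _ _ _ IH c.
  have h4 : tt3 (Pp w m).+1 <= tt3 (Pp w k).+1.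
    by apply: tt3_le; rewrite ltnS Pp_mono // -ltnS.
  move: hd; rewrite ltr_norml => /andP[h1 h2].
  lra.
- have IH' : forall i, (i < k)%N -> w' i = w i by move=> j /IH ->.
  have h3 := Ecode_sep _ _ _ IH' c.
  have h4 : tt3 (Pp w m).+1 <= tt3 (Pp w' k).+1.
    apply: tt3_le; rewrite ltnS; apply: leq_trans (Pp_mono w k m _).
      apply: ltnW; rewrite /Pp !big_ord_recr /= (@eq_bigr _ _ _ _ _ _ (fun i => w' (nat_of_ord i)) (fun i => w (nat_of_ord i))).
        by move: c; set S := (\sum_(_ < _) _)%N; lia.
      by move=> j _; apply: IH'.
    by rewrite -ltnS.
  move: hd; rewrite ltr_norml => /andP[h1 h2].
  lra.
Qed.

Lemma Ecode_in w n : Sp w n <= Ecode w <= Sp w n + tt3 (w n).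
Proof.
have /andP[h1 h2] := Ecode_bounds w n.
rewrite h1 /=; apply: (le_trans h2); rewrite /Tp lerD2l; apply: tt3_le; apply: Pp_ge.
Qed.


Lemma tt3_small (e : R) : 0 < e -> exists L, tt3 L < e.
Proof.
move=> e0; have e1 : 0 <= e^-1 by rewrite invr_ge0 ltW.
pose n := Num.Def.archi_bound (e^-1).
have hn := archi_boundP e1.
exists n; rewrite /tt3 -(invrK e) ltf_pV2 ?posrE ?exprn_gt0 ?invr_gt0 //.
apply: (lt_le_trans hn); rewrite -natrX ler_nat; apply: ltnW; exact: ltn_expl.
Qed.


Lemma cover_lemma (eps : nat -> R) : (forall j, 0 < eps j) ->
  exists (G : nat -> nat) (a b : nat -> R), (forall j, b j - a j < eps j) /\
   forall w, ~ (forall n, (w n <= G n)%N) -> exists j, a j <= Ecode w <= b j.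
Proof.
move=> epos.
have [L HL] := choice (P := fun j L => tt3 L < eps j) (fun j => tt3_small _ (epos j)).
pose a j := Sp (fun i => nth 0%N (CodeSeq.decode j) i) (size (CodeSeq.decode j)).
exists (GG L), a, (fun j => a j + tt3 (L j)); split.
  by move=> j; rewrite addrC addKr; apply: HL.
move=> w /existsNP[n0 hn0].
have exP : exists n, (GG L n < w n)%N by exists n0; rewrite ltnNge; apply/negP.
case: (ex_minnP exP) => m hm hmin.
have hle : forall i, (i < m)%N -> (w i <= GG L i)%N.
  move=> i im; rewrite leqNgt; apply/negP => /hmin; rewrite leqNgt im //.
pose s := mkseq w m.
exists (CodeSeq.code s).
have ea : a (CodeSeq.code s) = Sp w m.
  rewrite /a CodeSeq.codeK size_mkseq; apply: Sp_agree => i im.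
  by rewrite nth_mkseq.
have hall : all (fun x => x <= Hh L m)%N s.
  apply/allP => x /mapP [i]; rewrite mem_iota add0n => /andP[_ im] ->.
  exact: leq_trans (hle i im) (GG_le_Hh L _ _ im).
have hc : (CodeSeq.code s <= 2 ^ (m * (Hh L m).+1))%N.
  apply: ltnW; apply: leq_trans (code_bound s) _.
  rewrite leq_exp2l //; have := sumn_bound _ _ hall; rewrite size_mkseq //.
have hLj : (L (CodeSeq.code s) < w m)%N.
  exact: leq_ltn_trans (Mm_ge L _ _ hc) hm.
rewrite ea; have /andP[h1 h2] := Ecode_in w m.
rewrite h1 /=; apply: (le_trans h2); rewrite lerD2l; apply: tt3_le; exact: ltnW.
Qed.

End Coding.
Arguments Ecode {R}. Arguments tt3 {R}. Arguments Sp {R}. Arguments Tp {R}.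
Arguments Ecode_agree {R w w' m}. Arguments tt3_gt0 {R}. Arguments cover_lemma {R}.

Lemma two_small (R : realType) (e : R) : 0 < e -> exists m : nat, ((2:R) ^+ m)^-1 < e.
Proof.
move=> e0; have e1 : 0 <= e^-1 by rewrite invr_ge0 ltW.
pose n := Num.Def.archi_bound (e^-1).
have hn := archi_boundP e1.
exists n; rewrite -(invrK e) ltf_pV2 ?posrE ?exprn_gt0 ?invr_gt0 //.
apply: (lt_le_trans hn); rewrite -natrX ler_nat; apply: ltnW; exact: ltn_expl.
Qed.

Lemma floor_close (R : realType) (a b : R) : Num.floor a = Num.floor b -> `|a - b| < 1.
Proof.
move=> e.
have h1 := Num.Theory.floor_le a. have h2 := Num.Theory.floorD1_gt a.
have h3 := Num.Theory.floor_le b. have h4 := Num.Theory.floorD1_gt b.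
rewrite -e in h3 h4; rewrite intrD in h2 h4.
move: h1 h2 h3 h4; set F := ((Num.floor a)%:~R : R) => h1 h2 h3 h4.
rewrite ltr_norml; apply/andP; split; lra.
Qed.

Import numFieldNormedType.Exports.

Theorem theorem2p1 (R : realType) :
  (exists A : set (nat -> nat), card_is_nonSMZ R A /\ strongly_unbounded A) ->
  exists (X : set R) (f : R -> R),
    strongly_null X /\ {within X, continuous f} /\ ~ strongly_null (f @` X).
Proof.
case=> A [[X0 [nsX0 [cAX sm]]] su].
have : (X0 #= A)%card by rewrite card_eq_sym.
move=> /card_set_bijP [k [kfun kinj ksurj]].
pose W (y : R) (n : nat) : nat :=
  if odd n then pickle (Num.floor (2 ^+ n./2 * y)) else k y n./2.
pose X : set R := (fun y => @Ecode R (W y)) @` X0.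
pose f (x : R) : R := xget 0 [set y | X0 y /\ x = @Ecode R (W y)].
have fE : forall y, X0 y -> f (Ecode (W y)) = y.
  move=> y Xy.
  have := xgetPex 0 (ex_intro (fun y' => X0 y' /\ @Ecode R (W y) = @Ecode R (W y')) y (conj Xy erefl)).
  move=> H; have [Xy' ee] : X0 (f (Ecode (W y))) /\ Ecode (W y) = Ecode (W (f (Ecode (W y)))) := H.
  have agr : forall i, W y i = W (f (Ecode (W y))) i.
    move=> i.
    have hd : `|@Ecode R (W y) - Ecode (W (f (Ecode (W y))))| < tt3 (Pp (W y) i).+1.
      by rewrite -ee subrr normr0 tt3_gt0.
    exact: (Ecode_agree hd _ (leqnn i)).
  apply: kinj; rewrite ?inE //.
  apply/funext => n; have := agr n.*2; rewrite /W odd_double doubleK //.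
have fX : f @` X = X0.
  apply/seteqP; split => [_ [_ [y Xy <-] <-]|y Xy]; first by rewrite fE.
  by exists (Ecode (W y)) => //; [exists y | rewrite fE].
exists X, f; split; last split; last by rewrite fX.
- move=> eps epos.
  have [G [a1 [b1 [h1 hcov]]]] := cover_lemma (fun j => eps j.*2.+1) (fun j => epos _).
  pose D := [set y | X0 y /\ forall n, (W y n <= G n)%N].
  pose Z : set R := (fun y => @Ecode R (W y)) @` D.
  pose g n := G n.*2.
  pose Aset := [set a | A a /\ leq_star a g].
  have [sA nA] := su g.
  have ZD : (Z #<= D)%card by apply: card_image_le.
  have DA : (D #<= Aset)%card.
    have kinjD : {in D &, injective k}.
      by move=> u v; rewrite !inE => -[Xu _] [Xv _]; apply: kinj; rewrite inE.
    have := inj_card_eq kinjD; rewrite card_eq_sym => /card_eqPle[h _].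
    apply: (card_le_trans h); apply: subset_card_le => _ [y [Xy hy] <-]; split.
      exact: kfun.
    exists 0%N => n _; have := hy n.*2; rewrite /W odd_double doubleK //.
  have [AX XA] : (A #<= X0)%card /\ (X0 #<= A)%card by apply/card_eqPle.
  have cZ : card_lt Z X0.
    split.
      exact: card_le_trans ZD (card_le_trans DA (card_le_trans sA AX)).
    move=> XZ; apply: nA.
    exact: card_le_trans AX (card_le_trans XZ (card_le_trans ZD DA)).
  have [a2 [b2 [h2 c2]]] := sm Z cZ (fun j => eps j.*2) (fun j => epos _).
  exists (fun i => if odd i then a1 i./2 else a2 i./2).
  exists (fun i => if odd i then b1 i./2 else b2 i./2).
  split.
    move=> i; have := odd_double_half i; case: (odd i) => /= e.
      by rewrite -[in eps i]e add1n; apply: h1.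
    by rewrite -[in eps i]e add0n; apply: h2.
  move=> _ [y Xy <-].
  case: (pselect (forall n, (W y n <= G n)%N)) => hG.
    have : Z (Ecode (W y)) by exists y.
    move=> /c2 [j _ hj]; exists j.*2 => //=.
    by rewrite odd_double doubleK.
  have [j hj] := hcov _ hG.
  exists j.*2.+1 => //=.
  rewrite odd_double /= uphalf_double.
  by rewrite /= in_itv /=.
apply/subspace_continuousP => _ [y Xy <-].
change (f @ within X (nbhs (Ecode (W y))) --> f (Ecode (W y))); rewrite fE //.
apply/cvgrPdist_lt => e e0.
have [m hm] := two_small _ _ e0.
rewrite near_withinE /=; apply/nbhs_ballP.
exists (tt3 (Pp (W y) m.*2.+1).+1); first exact: tt3_gt0.
move=> t bt [y' Xy' et]; rewrite -et fE //.
rewrite -et -ball_normE /= in bt.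
have := Ecode_agree bt _ (leqnn _).
rewrite /W /= odd_double /= uphalf_double => /(pcan_inj pickleK) /floor_close.
rewrite -mulrBr normrM ger0_norm ?exprn_ge0 // => h.
have p0 : (0:R) < 2 ^+ m by rewrite exprn_gt0.
have h' : `|y - y'| < (2 ^+ m)^-1 by rewrite -div1r ltr_pdivlMr // mulrC.
exact: lt_trans h' hm.
Qed.
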